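(* For $a,b\in\mathbb{C}\setminus\{0\}$ let $$f_{a,b}(z)=\frac{z^3+az^2+b}{-\overline{b}z^3-\overline{a}z+1}.$$ If $c,d\in\mathbb{R}\setminus\{0\}$, then $f_{c,di}$ is conjugate, via a conformal map of $\mathbb{C}_\infty$ that is either orientation preserving or orientation reversing, to a map $f_{a,bi}$ of the same form with $a,b\in\mathbb{R}$, $a\ge0$ and $b\ge0$. *)

(* Defs.v *)
From HB Require Import structures.
From mathcomp Require Import all_boot all_order all_algebra.
From mathcomp Require Import complex.
Set Implicit Arguments. Unset Strict Implicit. Unset Printing Implicit Defensive.
Import Order.TTheory GRing.Theory Num.Theory.
Local Open Scope ring_scope.
Local Open Scope complex_scope.

(* Complex numbers: R[i] over a real closed field R (R = the reals in the paper). *)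

(* The extended complex plane C_oo = C u {oo}; None is the point at infinity. *)
Definition sphere (R : rcfType) := option R[i].

(* Evaluation on C_oo of the rational function P/Q (Q <> 0), after cancelling
   the common factor gcd(P,Q), so that it is the genuine rational map. *)
Definition rat_eval (R : rcfType) (P Q : {poly R[i]}) (z : sphere R) : sphere R :=
  let g := gcdp P Q in
  let P' := P %/ g in
  let Q' := Q %/ g in
  match z with
  | Some w => if Q'.[w] != 0 then Some (P'.[w] / Q'.[w]) else None
  | None => if (size Q' < size P')%N then None
            else if size P' == size Q' then Some (lead_coef P' / lead_coef Q')
            else Some 0
  end.

Definition fnum (R : rcfType) (a b : R[i]) : {poly R[i]} :=
  'X^3 + a *: 'X^2 + b%:P.
Definition fden (R : rcfType) (a b : R[i]) : {poly R[i]} :=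
  (- conjc b) *: 'X^3 - (conjc a) *: 'X + 1.
Definition f_ab (R : rcfType) (a b : R[i]) : sphere R -> sphere R :=
  rat_eval (fnum a b) (fden a b).

(* Orientation preserving conformal automorphisms of C_oo: Moebius maps
   z |-> (al z + be)/(ga z + de) with al de - be ga <> 0. *)
Definition mobius (R : rcfType) (al be ga de : R[i]) : sphere R -> sphere R :=
  rat_eval (al *: 'X + be%:P) (ga *: 'X + de%:P).

Definition is_mobius (R : rcfType) (phi : sphere R -> sphere R) : Prop :=
  exists al be ga de : R[i], al * de - be * ga != 0 /\ phi =1 mobius al be ga de.

Definition sconj (R : rcfType) (z : sphere R) : sphere R := omap (@conjc R) z.

(* Orientation reversing conformal automorphisms: Moebius composed with conjugation. *)
Definition is_antimobius (R : rcfType) (phi : sphere R -> sphere R) : Prop :=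
  exists al be ga de : R[i], al * de - be * ga != 0 /\
    phi =1 (mobius al be ga de) \o (@sconj R).

(* Main.v *)
Require Import Defs.
From HB Require Import structures.
From mathcomp Require Import all_boot all_order all_algebra.
From mathcomp Require Import complex.
From mathcomp Require Import ring.
Import Order.TTheory GRing.Theory Num.Theory.
Local Open Scope ring_scope.
Local Open Scope complex_scope.

Section Aux.
Variable R : rcfType.
Implicit Types (P Q u v h : {poly R[i]}).

Definition ep (u v : {poly R[i]}) (z : sphere R) : sphere R :=
  match z with
  | Some w => if v.[w] != 0 then Some (u.[w] / v.[w]) else None
  | None => if (size v < size u)%N then None
            else if size u == size v then Some (lead_coef u / lead_coef v)
            else Some 0
  end.

Lemma rat_eval_ep P Q z :
  rat_eval P Q z = ep (P %/ gcdp P Q) (Q %/ gcdp P Q) z.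
Proof. by []. Qed.

Lemma ep_scale (k : R[i]) u v z : k != 0 -> ep (k *: u) (k *: v) z = ep u v z.
Proof.
move=> k0; case: z => [w|] /=.
  rewrite !hornerZ mulf_eq0 negb_or k0 /=.
  case: ifP => // hv; congr Some; rewrite invfM mulrACA divff // mul1r //.
rewrite !size_scale // !lead_coefZ invfM mulrACA divff // mul1r //.
Qed.

Lemma ep_factor P Q u v h z : h != 0 -> coprimep u v -> P = u * h -> Q = v * h ->
  rat_eval P Q z = ep u v z.
Proof.
move=> h0 cuv eP eQ; rewrite rat_eval_ep.
have e1 : gcdp P Q %= h.
  rewrite eP eQ eqp_sym.
  apply: eqp_trans (mulp_gcdl u v h).
  have : gcdp u v %= 1 by rewrite gcdp_eqp1.
  move=> H; rewrite -{1}(mul1r h) eqp_sym.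
  by rewrite eqp_mul2r.
set g := gcdp P Q in e1 *.
case/eqpP: e1 => [[c1 c2]] /= /andP [c10 c20] e.
have eh : h = (c1 / c2) *: g.
  by rewrite mulrC -scalerA e scalerA mulVf // scale1r.
have g0 : g != 0.
  by apply: contra h0 => /eqP g0; rewrite eh g0 scaler0.
have ck : c1 / c2 != 0 by rewrite mulf_neq0 // invr_eq0.
have -> : P %/ g = (c1 / c2) *: u by rewrite eP eh -scalerAr divpZl mulpK.
have -> : Q %/ g = (c1 / c2) *: v by rewrite eQ eh -scalerAr divpZl mulpK.
exact: ep_scale.
Qed.

Definition cn (p : {poly R[i]}) := p \Po (- 'X).
Definition sneg (z : sphere R) : sphere R := omap (fun w => - w) z.

Lemma size_nX : size (- 'X : {poly R[i]}) = 2%N.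
Proof. by rewrite size_opp size_polyX. Qed.

Lemma cnM p q : cn (p * q) = cn p * cn q.
Proof. exact: comp_polyM. Qed.

Lemma comp_polyNN (p q : {poly R[i]}) : (- p) \Po q = - (p \Po q).
Proof. by rewrite -sub0r comp_polyB comp_poly0 sub0r. Qed.

Lemma cnK p : cn (cn p) = p.
Proof.
by rewrite /cn -comp_polyA comp_polyNN comp_polyX opprK comp_polyXr.
Qed.

Lemma cn_eq0 p : (cn p == 0) = (p == 0).
Proof. by rewrite -!size_poly_eq0 /cn size_comp_poly2 // size_nX. Qed.

Lemma cn_coprime u v : coprimep u v -> coprimep (- cn u) (cn v).
Proof.
case/Bezout_eq1_coprimepP => [[a b]] /= e.
apply/Bezout_eq1_coprimepP; exists (- cn a, cn b) => /=.
by rewrite mulrNN -!cnM /cn -comp_polyD e comp_polyC.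
Qed.

Lemma ep_neg u v z : sneg (ep u v z) = ep (- cn u) (cn v) (sneg z).
Proof.
case: z => [w|] /=.
  rewrite /cn hornerN !horner_comp hornerN hornerX opprK.
  by case: ifP => //= _; rewrite mulNr.
rewrite size_opp /cn !size_comp_poly2 ?size_nX //.
case: ifP => //= _; case: ifP => /= [/eqP e|_]; last by rewrite oppr0.
rewrite lead_coefN !lead_coef_comp ?size_nX // e lead_coefN lead_coefX.
have s0 : (-1 : R[i]) ^+ (size v).-1 != 0 by rewrite expf_neq0 // oppr_eq0 oner_eq0.
by rewrite mulNr invfM mulrACA divff // mulr1.
Qed.

Lemma L_neg P Q z : Q != 0 ->
  sneg (rat_eval P Q z) = rat_eval (- cn P) (cn Q) (sneg z).
Proof.
move=> Q0; rewrite rat_eval_ep.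
set g := gcdp P Q.
have g0 : g != 0 by rewrite gcdp_eq0 negb_and Q0 orbT.
have cop : coprimep (P %/ g) (Q %/ g) by apply: coprimep_div_gcd; rewrite Q0 orbT.
rewrite ep_neg (@ep_factor _ _ (- cn (P %/ g)) (cn (Q %/ g)) (cn g)) //.
- by rewrite cn_eq0.
- exact: cn_coprime.
- by rewrite mulNr -cnM divpK // dvdp_gcdl.
- by rewrite -cnM divpK // dvdp_gcdr.
Qed.

Definition mc (p : {poly R[i]}) := map_poly (@conjc R) p.

Lemma ep_conj u v z : sconj (ep u v z) = ep (mc u) (mc v) (sconj z).
Proof.
case: z => [w|] /=.
  rewrite /mc !horner_map conjc_eq0.
  by case: ifP => //= _; rewrite fmorph_div.
rewrite /mc !size_map_poly.
case: ifP => // _; case: ifP => _; last exact: (congr1 Some (rmorph0 (@conjc R))).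
rewrite !lead_coef_map; exact: (congr1 Some (fmorph_div (@conjc R) _ _)).
Qed.

Lemma L_conj P Q z : Q != 0 ->
  sconj (rat_eval P Q z) = rat_eval (mc P) (mc Q) (sconj z).
Proof.
move=> Q0; rewrite rat_eval_ep.
set g := gcdp P Q.
have g0 : g != 0 by rewrite gcdp_eq0 negb_and Q0 orbT.
have cop : coprimep (P %/ g) (Q %/ g) by apply: coprimep_div_gcd; rewrite Q0 orbT.
rewrite ep_conj (@ep_factor _ _ (mc (P %/ g)) (mc (Q %/ g)) (mc g)) //.
- by rewrite /mc map_poly_eq0.
- by rewrite /mc coprimep_map.
- by rewrite /mc -rmorphM divpK // dvdp_gcdl.
- by rewrite /mc -rmorphM divpK // dvdp_gcdr.
Qed.


Lemma fnum_neg (a b : R[i]) : fnum (-a) (-b) = - cn (fnum a b).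
Proof.
rewrite /fnum /cn !comp_polyD !comp_polyZ !comp_Xn_poly comp_polyC.
rewrite -!mul_polyC !polyCN; ring.
Qed.

Lemma fden_neg (a b : R[i]) : fden (-a) (-b) = cn (fden a b).
Proof.
rewrite /fden /cn !comp_polyD ?comp_polyB ?comp_polyNN !comp_polyZ !comp_Xn_poly comp_polyX comp_polyC.
rewrite !rmorphN -!mul_polyC !polyCN; ring.
Qed.

Lemma fnum_conj (a b : R[i]) : mc (fnum a b) = fnum a^* b^*.
Proof. by rewrite /mc /fnum !rmorphD /= !map_polyZ !map_polyXn map_polyC. Qed.

Lemma fden_conj (a b : R[i]) : mc (fden a b) = fden a^* b^*.
Proof.
by rewrite /mc /fden !rmorphD !rmorphN /= !map_polyZ map_polyXn map_polyX rmorph1 rmorphN.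
Qed.

Lemma fden_neq0 (a b : R[i]) : fden a b != 0.
Proof.
apply/eqP => e; have := congr1 (horner^~ 0) e.
rewrite /fden !hornerE /= => /eqP; rewrite ?expr0n /= ?mulr0 ?mul0r ?sub0r ?add0r ?oppr0 ?subr0.
move=> /eqP h; have : (1 : R[i]) = 0 by rewrite -h addrC addr0.
by move/eqP; rewrite oner_eq0.
Qed.

Lemma f_neg (a b : R[i]) z : sneg (f_ab a b z) = f_ab (-a) (-b) (sneg z).
Proof. by rewrite /f_ab L_neg ?fden_neq0 // fnum_neg fden_neg. Qed.

Lemma f_conj (a b : R[i]) z : sconj (f_ab a b z) = f_ab a^* b^* (sconj z).
Proof. by rewrite /f_ab L_conj ?fden_neq0 // fnum_conj fden_conj. Qed.


Lemma mob_neg z : mobius (-1 : R[i]) 0 0 1 z = sneg z.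
Proof.
rewrite /mobius (@ep_factor _ _ (- 'X) 1 1).
- case: z => [w|] /=.
    by rewrite hornerN hornerX hornerC oner_eq0 /= divr1.
  by rewrite size_polyN size_polyX size_polyC oner_eq0.
- by rewrite oner_eq0.
- exact: coprimep1.
- by rewrite scaleN1r polyC0 addr0 mulr1.
- by rewrite scale0r add0r polyC1 mulr1.
Qed.

Lemma mob_id (z : sphere R) : mobius (1 : R[i]) 0 0 1 z = z.
Proof.
rewrite /mobius (@ep_factor _ _ 'X 1 1).
- case: z => [w|] /=.
    by rewrite hornerX hornerC oner_eq0 /= divr1.
  by rewrite size_polyX size_polyC oner_eq0.
- by rewrite oner_eq0.
- exact: coprimep1.
- by rewrite scale1r polyC0 addr0 mulr1.
- by rewrite scale0r add0r polyC1 mulr1.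
Qed.

Lemma det1 : (1 : R[i]) * 1 - 0 * 0 != 0.
Proof. by rewrite mulr1 mulr0 subr0 oner_eq0. Qed.

Lemma detN1 : (-1 : R[i]) * 1 - 0 * 0 != 0.
Proof. by rewrite mulr1 mulr0 subr0 oppr_eq0 oner_eq0. Qed.

Lemma negC (c : R) : ((-c)%:C : R[i]) = - c%:C.
Proof. by apply/eqP; rewrite eq_complex /= oppr0 !eqxx. Qed.

Lemma negI (d : R) : (Complex 0 (-d) : R[i]) = - Complex 0 d.
Proof. by apply/eqP; rewrite eq_complex /= oppr0 !eqxx. Qed.

Lemma conjI (d : R) : (Complex 0 d : R[i])^* = Complex 0 (-d).
Proof. by []. Qed.

End Aux.
Arguments sneg {R} z.

Theorem mainTheorem7 (R : rcfType) (c d : R) (hc : c != 0) (hd : d != 0) :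
  exists (a b : R), [/\ 0 <= a, 0 <= b, a != 0 & b != 0] /\
    exists phi : sphere R -> sphere R,
      (is_mobius phi \/ is_antimobius phi) /\
      forall z : sphere R,
        phi (f_ab c%:C (Complex 0 d) z) = f_ab a%:C (Complex 0 b) (phi z).
Proof.
move: hc hd; rewrite !neq_lt => /orP [c0|c0] /orP [d0|d0].
-
  exists (-c), (-d); split.
    split; [by rewrite oppr_ge0 ltW | by rewrite oppr_ge0 ltW | by rewrite oppr_eq0 ltr0_neq0 | by rewrite oppr_eq0 ltr0_neq0].
  exists (@sneg R); split.
    by left; exists (-1), 0, 0, 1; split; [exact: detN1 | move=> z; rewrite mob_neg].
  by move=> z; rewrite f_neg negC negI.
-
  exists (-c), d; split.
    split; [by rewrite oppr_ge0 ltW | exact: ltW | by rewrite oppr_eq0 ltr0_neq0 | exact: lt0r_neq0].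
  exists (fun z => sneg (sconj z)); split.
    by right; exists (-1), 0, 0, 1; split; [exact: detN1 | move=> z /=; rewrite mob_neg].
  move=> z; rewrite f_conj f_neg conjc_real conjI negC -negI opprK //.
-
  exists c, (-d); split.
    split; [exact: ltW | by rewrite oppr_ge0 ltW | exact: lt0r_neq0 | by rewrite oppr_eq0 ltr0_neq0].
  exists (@sconj R); split.
    by right; exists 1, 0, 0, 1; split; [exact: det1 | move=> z /=; rewrite mob_id].
  by move=> z; rewrite f_conj conjc_real conjI.
- exists c, d; split.
    split; [exact: ltW | exact: ltW | exact: lt0r_neq0 | exact: lt0r_neq0].
  exists id; split.
    by left; exists 1, 0, 0, 1; split; [exact: det1 | move=> z; rewrite mob_id].
  by [].
Qed.
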